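(* Any two disjoint non-wide $2$-way infinite $3$-monotone chains $A$ and $B$ are comparable (in one order or the other) by at least one of the three relations ''below'', ''above'', and ''to the left of''.
   Context: A curve is $x$-monotone if every vertical line meets it in at most one point. A $2$-way infinite $k$-monotone chain is a (possibly self-intersecting) continuous curve in the plane that is the union of $k$ consecutive $x$-monotone pieces, consecutive pieces sharing an endpoint, with the first and last pieces having unbounded projections to the $x$-axis. It is wide if it meets every vertical line, and non-wide otherwise. For a non-wide chain $A$, the complement $\mathbb R^2\setminus A$ has exactly one connected component containing a vertical line, its large component. $A$ is a right chain if $A$ lies to the right of the vertical lines contained in its large component, and a left chain otherwise. The left side of a right chain $A$ is its large component; the left side of a left chain $A$ is the union of all connected components of $\mathbb R^2\setminus A$ other than the large component. For non-wide chains $A,B$, $A$ is to the left of $B$ if $A$ together with the left side of $A$ is contained in the left side of $B$. For sets $A,B\subseteq\mathbb R^2$, $A$ is below (resp. above) $B$ if every vertical line meeting $A$ also meets $B$, and whenever $a\in A\cap\ell$, $b\in B\cap\ell$ for a vertical line $\ell$, the $y$-coordinate of $a$ is strictly smaller (resp. strictly larger) than that of $b$. *)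

(* Defs.v *)
From HB Require Import structures.
From mathcomp Require Import all_boot all_order all_algebra.
From mathcomp Require Import all_classical all_reals all_analysis.
Set Implicit Arguments. Unset Strict Implicit. Unset Printing Implicit Defensive.
Import Order.TTheory GRing.Theory Num.Theory.
Import numFieldNormedType.Exports.
Local Open Scope classical_set_scope.
Local Open Scope ring_scope.

Section Chains.
Variable R : realType.
Notation pt := (R * R)%type.

Definition vline (c : R) : set pt := [set p | p.1 = c].

(* graph of f over the x-domain D : an x-monotone curve when D is an
   interval and f is continuous on D *)
Definition graph_over (f : R -> R) (D : set R) : set pt :=
  [set p | D p.1 /\ p.2 = f p.1].

Definition ray (x : R) (dir : bool) : set R :=
  if dir then [set t | x <= t] else [set t | t <= x].

Definition seg (a b : R) : set R := [set t | Num.min a b <= t <= Num.max a b].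

(* A is a 2-way infinite 3-monotone chain: union of three consecutive
   x-monotone pieces (graphs of continuous functions over intervals),
   consecutive pieces sharing an endpoint, the first and last pieces
   having unbounded x-projections (closed rays). *)
Definition three_monotone_chain (A : set pt) : Prop :=
  exists (x1 x2 : R) (d1 d3 : bool) (f1 f2 f3 : R -> R),
    [/\ {within ray x1 d1, continuous f1},
        {within seg x1 x2, continuous f2},
        {within ray x2 d3, continuous f3},
        f1 x1 = f2 x1 /\ f2 x2 = f3 x2 &
        A = graph_over f1 (ray x1 d1) `|` graph_over f2 (seg x1 x2)
            `|` graph_over f3 (ray x2 d3)].

Definition wide (A : set pt) : Prop := forall c : R, A `&` vline c !=set0.
Definition non_wide (A : set pt) : Prop := ~ wide A.

(* the large component: the union of the connected components of the
   complement of A that contain a vertical line (for non-wide chains there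
   is exactly one such component) *)
Definition large_component (A : set pt) : set pt :=
  [set p | ~ A p /\ exists c, vline c `<=` connected_component (~` A) p].

Definition right_chain (A : set pt) : Prop :=
  forall c, vline c `<=` large_component A -> forall p, A p -> c < p.1.

Definition left_chain (A : set pt) : Prop := ~ right_chain A.

Definition left_side (A : set pt) : set pt :=
  [set p | (right_chain A /\ large_component A p) \/
           (left_chain A /\ ~ A p /\ ~ large_component A p)].

Definition to_the_left_of (A B : set pt) : Prop :=
  A `|` left_side A `<=` left_side B.

Definition below (A B : set pt) : Prop :=
  forall c, A `&` vline c !=set0 ->
    B `&` vline c !=set0 /\
    forall a b, A a -> B b -> a.1 = c -> b.1 = c -> a.2 < b.2.

Definition above (A B : set pt) : Prop :=
  forall c, A `&` vline c !=set0 ->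
    B `&` vline c !=set0 /\
    forall a b, A a -> B b -> a.1 = c -> b.1 = c -> a.2 > b.2.

End Chains.

(* Main.v *)
Require Import Defs.
From HB Require Import structures.
From mathcomp Require Import all_boot all_order all_algebra.
From mathcomp Require Import all_classical all_reals all_analysis.
From mathcomp Require Import lra.
Set Implicit Arguments. Unset Strict Implicit. Unset Printing Implicit Defensive.
Import Order.TTheory GRing.Theory Num.Theory.
Import numFieldNormedType.Exports.
Local Open Scope classical_set_scope.
Local Open Scope ring_scope.

Lemma conn_split (T : topologicalType) (C U V : set T) :
  connected C -> open U -> open V -> C `<=` U `|` V -> C `&` U `&` V = set0 ->
  C `<=` U \/ C `<=` V.
Proof.
move=> cC oU oV CUV CUV0.
have [/eqP|/set0P ne] := boolP (C `&` U == set0).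
  move=> CU0; right => x Cx; case: (CUV x Cx) => // Ux.
  by have : (C `&` U) x by []; rewrite CU0.
left.
have E : C `&` U = C `&` ~` V.
  apply/seteqP; split => x [Cx H]; split => //.
    by move=> Vx; have : (C `&` U `&` V) x by []; rewrite CUV0.
  by case: (CUV x Cx).
have := cC (C `&` U) ne.
move=> /(_ (ex_intro2 _ _ U oU erefl)).
rewrite E => /(_ (ex_intro2 _ _ (~` V) (open_closedC oV) erefl)) H.
by rewrite -E in H; rewrite -H => x [].
Qed.

Lemma mm_cases (R : realType) (a b : R) :
  (Num.min a b = a /\ Num.max a b = b /\ a <= b) \/
  (Num.min a b = b /\ Num.max a b = a /\ b <= a).
Proof.
rewrite /Num.Def.minr /Num.Def.maxr.
case: (ltgtP a b) => h.
- by left; repeat split => //; exact: ltW.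
- by right; repeat split => //; exact: ltW.
- by left; subst; repeat split.
Qed.
Lemma within_comp (R : realType) (A : set R) (f g : R -> R) :
  {within A, continuous f} -> continuous g -> (forall x, A (g x)) ->
  continuous (f \o g).
Proof.
move=> /subspace_continuousP cf cg gA x.
apply: cvg_comp (cf _ (gA x)).
rewrite withinE => W /= [V nV WV].
have H : nbhs x (g @^-1` V) := cg x V nV.
apply: filterS H => y /= Vy.
have : (V `&` A) (g y) by split.
by rewrite -WV; case.
Qed.
Lemma open_pos (R : realType) (h : R * R -> R) : continuous h -> open [set p | 0 < h p].
Proof.
move=> ch.
have -> : [set p | 0 < h p] = h @^-1` [set x | x > 0] by [].
by apply: open_comp; [move=> x _; exact: ch | exact: open_gt].
Qed.

Lemma cont_fstG (R : realType) (G : R -> R) : continuous G ->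
  continuous (fun p : R * R => G p.1).
Proof. by move=> cG p; apply: continuous_comp; [exact: cvg_fst | exact: cG]. Qed.

Lemma cont_snd (R : realType) : continuous (fun p : R * R => p.2).
Proof. by move=> p; exact: cvg_snd. Qed.

Lemma cont_fst (R : realType) : continuous (fun p : R * R => p.1).
Proof. by move=> p; exact: cvg_fst. Qed.

Lemma cont_sub (R : realType) (T : topologicalType) (f g : T -> R) : continuous f -> continuous g ->
  continuous (fun p => f p - g p).
Proof. by move=> cf cg p; apply: continuousB; [exact: cf|exact: cg]. Qed.

Lemma cont_min (R : realType) (T : topologicalType) (f g : T -> R) : continuous f -> continuous g ->
  continuous (fun p => Num.min (f p) (g p)).
Proof. by move=> cf cg p; apply: (@continuous_min R T f g); [exact: cf|exact: cg]. Qed.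

Lemma cont_max (R : realType) (T : topologicalType) (f g : T -> R) : continuous f -> continuous g ->
  continuous (fun p => Num.max (f p) (g p)).
Proof. by move=> cf cg p; apply: (@continuous_max R T f g); [exact: cf|exact: cg]. Qed.

Lemma cont_mulc (R : realType) (T : topologicalType) (s : R) (f : T -> R) : continuous f ->
  continuous (fun p => s * f p).
Proof. by move=> cf p; apply: cvgM; [exact: cvg_cst|exact: cf]. Qed.

Lemma cont_scal (R : realType) (s m : R) : continuous (fun p : R * R => s * p.1 - m).
Proof.
apply: (cont_sub (f:=fun p => s * p.1) (g:=fun=> m)); last by move=> p; exact: cvg_cst.
exact: cont_mulc (@cont_fst R).
Qed.

Definition chainS (R : realType) (s m : R) (G1 G2 : R -> R) : set (R * R) :=
  [set p | m <= s * p.1 /\ (p.2 = G1 p.1 \/ p.2 = G2 p.1)].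
Definition hullS (R : realType) (s m : R) (G1 G2 : R -> R) : set (R * R) :=
  [set p | m <= s * p.1 /\
     Num.min (G1 p.1) (G2 p.1) <= p.2 /\ p.2 <= Num.max (G1 p.1) (G2 p.1)].
Definition goodS (R : realType) (s m : R) (G1 G2 : R -> R) :=
  [/\ s = 1 \/ s = -1, continuous G1, continuous G2 & G1 (s * m) = G2 (s * m)].

Lemma ss1 (R : realType) (s : R) : s = 1 \/ s = -1 -> s * s = 1.
Proof. by case=> ->; rewrite ?mulr1 ?mulrNN ?mulr1. Qed.

Lemma chain_hull (R : realType) (s m : R) G1 G2 :
  chainS s m G1 G2 `<=` hullS s m G1 G2.
Proof.
move=> p [h1 h2]; split => //.
case: (mm_cases (G1 p.1) (G2 p.1)) => [[-> [-> h]]|[-> [-> h]]];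
  case: h2 => ->; lra.
Qed.

Lemma open_Chull (R : realType) (s m : R) G1 G2 : goodS s m G1 G2 ->
  open (~` hullS s m G1 G2).
Proof.
case=> _ c1 c2 _.
have -> : ~` hullS s m G1 G2 =
  [set p | 0 < - (s * p.1 - m)] `|`
  [set p | 0 < Num.min (G1 p.1) (G2 p.1) - p.2] `|`
  [set p | 0 < p.2 - Num.max (G1 p.1) (G2 p.1)].
  apply/seteqP; split => p /=.
    move=> nh.
    case: (leP m (s * p.1)) => h1; last by left; left; lra.
    case: (leP (Num.min (G1 p.1) (G2 p.1)) p.2) => h2; last by left; right; lra.
    case: (leP p.2 (Num.max (G1 p.1) (G2 p.1))) => h3; last by right; lra.
    by exfalso; apply: nh.
  by move=> + [h1 [h2 h3]] => -[[h|h]|h]; lra.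
apply: openU; first apply: openU.
- apply: open_pos; move=> p; apply: cvgN; exact: cont_scal.
- apply: open_pos; apply: cont_sub; last exact: cont_snd.
  by apply: cont_min; apply: cont_fstG.
- apply: open_pos; apply: cont_sub; first exact: cont_snd.
  by apply: cont_max; apply: cont_fstG.
Qed.

Lemma open_HmC (R : realType) (s m : R) G1 G2 : goodS s m G1 G2 ->
  open (hullS s m G1 G2 `\` chainS s m G1 G2).
Proof.
case=> hs c1 c2 tip.
have s2 := ss1 hs.
have -> : hullS s m G1 G2 `\` chainS s m G1 G2 =
  [set p | 0 < s * p.1 - m] `&`
  [set p | 0 < p.2 - Num.min (G1 p.1) (G2 p.1)] `&`
  [set p | 0 < Num.max (G1 p.1) (G2 p.1) - p.2].
  apply/seteqP; split => p /=.
    move=> [[h1 [h2 h3]] nc].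
    have ne1 : p.2 <> G1 p.1 by move=> e; apply: nc; split => //; left.
    have ne2 : p.2 <> G2 p.1 by move=> e; apply: nc; split => //; right.
    case: (leP (s * p.1) m) => h4.
      have e : s * p.1 = m by apply/eqP; rewrite eq_le h4 h1.
      have e2 : p.1 = s * m by rewrite -e mulrA s2 mul1r.
      by exfalso; apply: ne1; move: h2 h3; rewrite e2 -tip minxx maxxx; lra.
    case: (mm_cases (G1 p.1) (G2 p.1)) => [[E1 [E2 h]]|[E1 [E2 h]]];
      rewrite E1 E2 in h2 h3 *.
    - have a : G1 p.1 < p.2 by rewrite lt_neqAle h2 andbT; apply/eqP => e; apply: ne1.
      have b : p.2 < G2 p.1 by rewrite lt_neqAle h3 andbT; apply/eqP.
      split; [split|]; lra.
    - have a : G2 p.1 < p.2 by rewrite lt_neqAle h2 andbT; apply/eqP => e; apply: ne2.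
      have b : p.2 < G1 p.1 by rewrite lt_neqAle h3 andbT; apply/eqP.
      split; [split|]; lra.
  move=> [[h1 h2] h3]; split.
    by split; [lra|split; lra].
  move=> [_ [e|e]]; case: (mm_cases (G1 p.1) (G2 p.1)) => [[E1 [E2 h]]|[E1 [E2 h]]];
    rewrite E1 E2 in h2 h3; lra.
apply: openI; first apply: openI.
- by apply: open_pos; exact: cont_scal.
- apply: open_pos; apply: cont_sub; first exact: cont_snd.
  by apply: cont_min; apply: cont_fstG.
- apply: open_pos; apply: cont_sub; last exact: cont_snd.
  by apply: cont_max; apply: cont_fstG.
Qed.

Lemma dichot (R : realType) (s m : R) G1 G2 (C : set (R * R)) : goodS s m G1 G2 ->
  connected C -> C `<=` ~` chainS s m G1 G2 ->
  C `<=` ~` hullS s m G1 G2 \/ C `<=` hullS s m G1 G2 `\` chainS s m G1 G2.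
Proof.
move=> g cC sub; apply: conn_split => //.
- exact: open_Chull.
- exact: open_HmC.
- move=> p Cp; case: (pselect (hullS s m G1 G2 p)) => h; [right|left] => //.
  by split => //; apply: sub.
- by apply/seteqP; split => p // [[_ a] [b _]].
Qed.

Lemma dom_conn (R : realType) (s m : R) : s = 1 \/ s = -1 ->
  connected [set t : R | m <= s * t].
Proof.
move=> hs; apply/connected_intervalP => x y /= hx hy z /andP[h1 h2].
by case: hs => E; rewrite E in hx hy *; lra.
Qed.

Lemma graph_cont (R : realType) (G : R -> R) : continuous G ->
  continuous (fun t : R => (t, G t)).
Proof. by move=> cG t; exact: (cvg_pair cvg_id (cG t)). Qed.

Lemma chain_conn (R : realType) (s m : R) G1 G2 : goodS s m G1 G2 ->
  connected (chainS s m G1 G2).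
Proof.
case=> hs c1 c2 tip.
set D := [set t : R | m <= s * t].
have -> : chainS s m G1 G2 = (fun t => (t, G1 t)) @` D `|` (fun t => (t, G2 t)) @` D.
  apply/seteqP; split => [[x y] /= [h [e|e]]|p [[t Dt <-]|[t Dt <-]]] /=.
  - by move: e => /= ->; left; exists x.
  - by move: e => /= ->; right; exists x.
  - by split => //; left.
  - by split => //; right.
apply: connectedU.
- have Dm : D (s * m) by rewrite /D /= mulrA ss1 // mul1r.
  exists (s * m, G1 (s * m)); split; first by exists (s * m).
  by exists (s * m) => //; rewrite tip.
- apply: connected_continuous_connected; first exact: dom_conn.
  by apply: continuous_subspaceT; exact: graph_cont.
- apply: connected_continuous_connected; first exact: dom_conn.
  by apply: continuous_subspaceT; exact: graph_cont.
Qed.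

Lemma seg_conn (R : realType) (a b : R) : connected (seg a b).
Proof.
apply/connected_intervalP => x y /= /andP[h1 h2] /andP[h3 h4] z /andP[h5 h6].
by apply/andP; split; [exact: le_trans h5|exact: le_trans h4].
Qed.

Lemma seg_l (R : realType) (a b : R) : seg a b a.
Proof. by rewrite /seg /=; case: (mm_cases a b) => [[-> [-> h]]|[-> [-> h]]]; apply/andP; split; lra. Qed.

Lemma seg_r (R : realType) (a b : R) : seg a b b.
Proof. by rewrite /seg /=; case: (mm_cases a b) => [[-> [-> h]]|[-> [-> h]]]; apply/andP; split; lra. Qed.

Lemma hseg_conn (R : realType) (a b k : R) :
  connected ((fun t : R => (t, k)) @` seg a b).
Proof.
apply: connected_continuous_connected; first exact: seg_conn.
apply: continuous_subspaceT => t; exact: (cvg_pair cvg_id (cvg_cst k)).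
Qed.

Lemma vseg_conn (R : realType) (x : R) (A : set R) : connected A ->
  connected ((fun t : R => (x, t)) @` A).
Proof.
move=> cA; apply: connected_continuous_connected => //.
apply: continuous_subspaceT => t; exact: (cvg_pair (cvg_cst x) cvg_id).
Qed.

Lemma vline_img (R : realType) (c : R) : Defs.vline c = (fun t : R => (c, t)) @` [set: R].
Proof.
apply/seteqP; split => [[x y] /= E|p [t _ <-]] //.
by exists y => //; move: E; rewrite /Defs.vline /= => ->.
Qed.

Lemma vline_conn (R : realType) (c : R) : connected (Defs.vline c).
Proof. rewrite vline_img; apply: vseg_conn; by apply/connected_intervalP. Qed.

Lemma bnd_below (R : realType) (f : R -> R) (a b : R) : continuous f ->
  exists K, forall t, seg a b t -> K < f t.
Proof.
move=> cf.
have ab : Num.min a b <= Num.max a b by case: (mm_cases a b) => [[-> [-> h]]|[-> [-> h]]]; lra.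
have cw : {within `[Num.min a b, Num.max a b], continuous f} by apply: continuous_subspaceT.
have [c _ H] := EVT_min ab cw.
exists (f c - 1) => t st; have := H t; rewrite in_itv /= => /(_ st); lra.
Qed.

Lemma bnd_above (R : realType) (f : R -> R) (a b : R) : continuous f ->
  exists K, forall t, seg a b t -> f t < K.
Proof.
move=> cf.
have ab : Num.min a b <= Num.max a b by case: (mm_cases a b) => [[-> [-> h]]|[-> [-> h]]]; lra.
have cw : {within `[Num.min a b, Num.max a b], continuous f} by apply: continuous_subspaceT.
have [c _ H] := EVT_max ab cw.
exists (f c + 1) => t st; have := H t; rewrite in_itv /= => /(_ st); lra.
Qed.

Lemma seg_out (R : realType) (s m a c : R) : s = 1 \/ s = -1 ->
  s * a < m -> s * c < m -> forall t, seg a c t -> s * t < m.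
Proof.
move=> hs ha hc t /= /andP[h1 h2].
case: (mm_cases a c) => [[E1 [E2 h]]|[E1 [E2 h]]]; rewrite E1 E2 in h1 h2;
  case: hs => E; rewrite E in ha hc *; lra.
Qed.

Lemma out_path (R : realType) (s m : R) G1 G2 : goodS s m G1 G2 ->
  forall p, ~ hullS s m G1 G2 p -> exists C : set (R * R),
  [/\ connected C, C `<=` ~` hullS s m G1 G2, C p &
      Defs.vline (s * (m - 1)) `<=` C].
Proof.
move=> g; case: (g) => hs c1 c2 tip [a b] /= np.
set c0 := s * (m - 1).
have sc0 : s * c0 = m - 1 by rewrite /c0 mulrA ss1 // mul1r.
have vl : Defs.vline c0 `<=` ~` hullS s m G1 G2.
  by move=> [x y]; rewrite /Defs.vline /= => -> [h _]; move: h; rewrite sc0; lra.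
have clo : continuous (fun x => Num.min (G1 x) (G2 x)) by apply: cont_min.
have chi : continuous (fun x => Num.max (G1 x) (G2 x)) by apply: cont_max.
case: (ltP (s * a) m) => ha.
  exists ((fun t => (t, b)) @` seg a c0 `|` Defs.vline c0); split.
  - apply: connectedU; [|exact: hseg_conn|exact: vline_conn].
    by exists (c0, b); split; [exists c0 => //; exact: seg_r|].
  - move=> q [[t st <-] [/= h _]|/vl //].
    have := seg_out hs ha _ st; rewrite sc0; lra.
  - by left; exists a => //; exact: seg_l.
  - by move=> q; right.
case: (ltP b (Num.min (G1 a) (G2 a))) => hb.
  have [K HK] := bnd_below a c0 clo.
  set K2 := Num.min K b.
  have K2K : K2 <= K by rewrite /K2; case: (mm_cases K b) => [[E1 [E2 h]]|[E1 [E2 h]]]; rewrite ?E1 ?E2; lra.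
  have K2b : K2 <= b by rewrite /K2; case: (mm_cases K b) => [[E1 [E2 h]]|[E1 [E2 h]]]; rewrite ?E1 ?E2; lra.
  exists (((fun t => (a, t)) @` seg b K2 `|` (fun t => (t, K2)) @` seg a c0)
          `|` Defs.vline c0); split.
  - apply: connectedU; last exact: vline_conn.
      by exists (c0, K2); split; [right; exists c0 => //; exact: seg_r|].
    apply: connectedU; [|by apply: vseg_conn; apply: seg_conn|exact: hseg_conn].
    by exists (a, K2); split; [exists K2 => //; exact: seg_r|exists a => //; exact: seg_l].
  - move=> q [[[t st <-]|[t st <-]]|/vl //] [/= _ [h _]].
      move: st => /= /andP[_]; case: (mm_cases b K2) => [[E1 [E2 h']]|[E1 [E2 h']]]; rewrite ?E1 ?E2;
        lra.
    by have := HK t st; lra.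
  - by left; left; exists b => //; exact: seg_l.
  - by move=> q; right.
case: (ltP (Num.max (G1 a) (G2 a)) b) => hb2; last first.
  by exfalso; apply: np.
have [K HK] := bnd_above a c0 chi.
set K2 := Num.max K b.
have K2K : K <= K2 by rewrite /K2; case: (mm_cases K b) => [[E1 [E2 h]]|[E1 [E2 h]]]; rewrite ?E1 ?E2; lra.
have K2b : b <= K2 by rewrite /K2; case: (mm_cases K b) => [[E1 [E2 h]]|[E1 [E2 h]]]; rewrite ?E1 ?E2; lra.
exists (((fun t => (a, t)) @` seg b K2 `|` (fun t => (t, K2)) @` seg a c0)
        `|` Defs.vline c0); split.
- apply: connectedU; last exact: vline_conn.
    by exists (c0, K2); split; [right; exists c0 => //; exact: seg_r|].
  apply: connectedU; [|by apply: vseg_conn; apply: seg_conn|exact: hseg_conn].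
  by exists (a, K2); split; [exists K2 => //; exact: seg_r|exists a => //; exact: seg_l].
- move=> q [[[t st <-]|[t st <-]]|/vl //] [/= _ [_ h]].
    move: st => /= /andP[+ _]; case: (mm_cases b K2) => [[E1 [E2 h']]|[E1 [E2 h']]]; rewrite ?E1 ?E2;
      lra.
  by have := HK t st; lra.
- by left; left; exists b => //; exact: seg_l.
- by move=> q; right.
Qed.

Lemma large_eq (R : realType) (s m : R) G1 G2 : goodS s m G1 G2 ->
  large_component (chainS s m G1 G2) = ~` hullS s m G1 G2.
Proof.
move=> g; apply/seteqP; split => p.
  move=> [np [c sub]] hp.
  have cK : connected (connected_component (~` chainS s m G1 G2) p)
    by apply: component_connected.
  have sK : connected_component (~` chainS s m G1 G2) p `<=` ~` chainS s m G1 G2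
    by apply: connected_component_sub.
  case: (dichot g cK sK) => H.
    by apply: (H p) => //; apply: connected_component_refl.
  case: (leP m (s * c)) => hc.
    have : connected_component (~` chainS s m G1 G2) p (c, G1 c) by apply: sub.
    by move/H => [_]; apply; split => //; left.
  have : connected_component (~` chainS s m G1 G2) p (c, 0) by apply: sub.
  by move/H => [[/= h _] _]; lra.
move=> np; split; first by move=> cp; apply: np; apply: chain_hull.
have [C [cC sC Cp vC]] := out_path g np.
exists (s * (m - 1)); apply: subset_trans vC _.
apply: connected_component_max => //.
by move=> q /sC nq cq; apply: nq; apply: chain_hull.
Qed.

Lemma right_iff (R : realType) (s m : R) G1 G2 : goodS s m G1 G2 ->
  right_chain (chainS s m G1 G2) <-> s = 1.
Proof.
move=> g; case: (g) => hs c1 c2 tip; rewrite /right_chain large_eq //; split.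
  move=> H; have s2 := ss1 hs; case: hs => // E; exfalso.
  have sc0 : s * (s * (m - 1)) = m - 1 by rewrite mulrA s2 mul1r.
  have vl : Defs.vline (s * (m - 1)) `<=` ~` hullS s m G1 G2.
    by move=> [x y]; rewrite /Defs.vline /= => -> [h _]; move: h; rewrite sc0; lra.
  have tipc : chainS s m G1 G2 (s * m, G1 (s * m)).
    by split; [rewrite /= mulrA s2 mul1r|left].
  by have := H _ vl _ tipc; rewrite /= E; lra.
move=> E c vl p [hp _].
case: (ltP c m) => hc; first by move: hp; rewrite E mul1r; lra.
exfalso; apply: (vl (c, G1 c)) => //; apply: chain_hull; split; rewrite /= ?E ?mul1r //.
by left.
Qed.

Lemma left_side_R (R : realType) (m : R) G1 G2 : goodS 1 m G1 G2 ->
  left_side (chainS 1 m G1 G2) = ~` hullS 1 m G1 G2.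
Proof.
move=> g; have rc : right_chain (chainS 1 m G1 G2) by apply/right_iff.
apply/seteqP; split => p.
  by case => [[_]|[lc _]]; [rewrite large_eq|].
by move=> h; left; split => //; rewrite large_eq.
Qed.


Lemma left_side_L (R : realType) (m : R) G1 G2 : goodS (-1) m G1 G2 ->
  left_side (chainS (-1) m G1 G2) = hullS (-1) m G1 G2 `\` chainS (-1) m G1 G2.
Proof.
move=> g.
have lc : ~ right_chain (chainS (-1) m G1 G2).
  by move/(right_iff g) => E; move: E; lra.
apply/seteqP; split => p.
  case => [[]//|[_ [np]]]; rewrite large_eq // => /contrapT h; by split.
move=> [h np]; right; split => //; split => //; rewrite large_eq //.
Qed.

Lemma HmC_strict (R : realType) (s m : R) G1 G2 : goodS s m G1 G2 ->
  forall p, (hullS s m G1 G2 `\` chainS s m G1 G2) p -> m < s * p.1.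
Proof.
case=> hs _ _ tip p [[h1 [h2 h3]] nc].
rewrite lt_neqAle h1 andbT; apply/eqP => e.
have e2 : p.1 = s * m by rewrite e mulrA ss1 // mul1r.
apply: nc; split; first by rewrite -e.
by left; move: h2 h3; rewrite e2 -tip minxx maxxx; lra.
Qed.

Lemma sub_sign (R : realType) (sA mA : R) GA1 GA2 (sB mB : R) GB1 GB2 :
  goodS sA mA GA1 GA2 -> goodS sB mB GB1 GB2 ->
  chainS sA mA GA1 GA2 `<=` hullS sB mB GB1 GB2 -> sA = sB.
Proof.
case=> hA _ _ _ [hB _ _ _] sub.
set M := Num.max mA (- mB).
have M1 : mA <= M by rewrite /M; case: (mm_cases mA (- mB)) => [[E1 [E2 h]]|[E1 [E2 h]]]; rewrite ?E1 ?E2; lra.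
have M2 : - mB <= M by rewrite /M; case: (mm_cases mA (- mB)) => [[E1 [E2 h]]|[E1 [E2 h]]]; rewrite ?E1 ?E2; lra.
case: hA => EA; case: hB => EB; rewrite EA EB // in sub *.
- have := sub (M + 1, GA1 (M + 1)); case; first by split; [rewrite /= mul1r; lra|left].
  by rewrite /=; lra.
- have := sub (- (M + 1), GA1 (- (M + 1))); case; first by split; [rewrite /=; lra|left].
  by rewrite /=; lra.
Qed.

Lemma tip_in (R : realType) (s m : R) G1 G2 : goodS s m G1 G2 ->
  chainS s m G1 G2 (s * m, G1 (s * m)).
Proof. by case=> hs _ _ _; split; [rewrite /= mulrA ss1 // mul1r|left]. Qed.

Lemma tip_contra (R : realType) (sA mA : R) GA1 GA2 (sB mB : R) GB1 GB2 :
  goodS sA mA GA1 GA2 -> goodS sB mB GB1 GB2 ->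
  chainS sA mA GA1 GA2 `<=` hullS sB mB GB1 GB2 `\` chainS sB mB GB1 GB2 ->
  chainS sB mB GB1 GB2 `<=` hullS sA mA GA1 GA2 `\` chainS sA mA GA1 GA2 -> False.
Proof.
move=> gA gB sAB sBA.
have E : sA = sB by apply: (sub_sign gA gB) => p /sAB [].
have h1 := HmC_strict gB (sAB _ (tip_in gA)).
have h2 := HmC_strict gA (sBA _ (tip_in gB)).
move: h1 h2; rewrite /= E mulrA mulrA ss1; first by lra.
by case: gB.
Qed.

Lemma sep_real (R : realType) (a1 a2 b1 b2 : R) :
  ~ (Num.min b1 b2 <= a1 /\ a1 <= Num.max b1 b2) ->
  ~ (Num.min b1 b2 <= a2 /\ a2 <= Num.max b1 b2) ->
  ~ (Num.min a1 a2 <= b1 /\ b1 <= Num.max a1 a2) ->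
  ~ (Num.min a1 a2 <= b2 /\ b2 <= Num.max a1 a2) ->
  Num.max a1 a2 < Num.min b1 b2 \/ Num.max b1 b2 < Num.min a1 a2.
Proof.
case: (mm_cases a1 a2) => [[E1 [E2 h]]|[E1 [E2 h]]];
case: (mm_cases b1 b2) => [[F1 [F2 h']]|[F1 [F2 h']]];
rewrite E1 E2 F1 F2 => n1 n2 n3 n4.
- case: (ltP a2 b1) => c1; first by left.
  case: (ltP b2 a1) => c2; first by right.
  exfalso; case: (leP b1 a1) => c3.
    by apply: n3; split; lra.
  by apply: n1; split; lra.
- case: (ltP a2 b2) => c1; first by left.
  case: (ltP b1 a1) => c2; first by right.
  exfalso; case: (leP b2 a1) => c3.
    by apply: n4; split; lra.
  by apply: n1; split; lra.
- case: (ltP a1 b1) => c1; first by left.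
  case: (ltP b2 a2) => c2; first by right.
  exfalso; case: (leP b1 a2) => c3.
    by apply: n3; split; lra.
  by apply: n2; split; lra.
- case: (ltP a1 b2) => c1; first by left.
  case: (ltP b1 a2) => c2; first by right.
  exfalso; case: (leP b2 a2) => c3.
    by apply: n4; split; lra.
  by apply: n2; split; lra.
Qed.

Lemma pw_sep (R : realType) (sA mA : R) GA1 GA2 (sB mB : R) GB1 GB2 (x : R) :
  chainS sA mA GA1 GA2 `<=` ~` hullS sB mB GB1 GB2 ->
  chainS sB mB GB1 GB2 `<=` ~` hullS sA mA GA1 GA2 ->
  mA <= sA * x -> mB <= sB * x ->
  Num.max (GA1 x) (GA2 x) < Num.min (GB1 x) (GB2 x) \/
  Num.max (GB1 x) (GB2 x) < Num.min (GA1 x) (GA2 x).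
Proof.
move=> sAB sBA hA hB; apply: sep_real.
- by move=> [h1 h2]; apply: (sAB (x, GA1 x)); [split => //; left|split].
- by move=> [h1 h2]; apply: (sAB (x, GA2 x)); [split => //; right|split].
- by move=> [h1 h2]; apply: (sBA (x, GB1 x)); [split => //; left|split].
- by move=> [h1 h2]; apply: (sBA (x, GB2 x)); [split => //; right|split].
Qed.

Lemma hull_sub (R : realType) (sA mA : R) GA1 GA2 (sB mB : R) GB1 GB2 :
  chainS sA mA GA1 GA2 `<=` hullS sB mB GB1 GB2 ->
  hullS sA mA GA1 GA2 `<=` hullS sB mB GB1 GB2.
Proof.
move=> sub [x y] [/= h1 [h2 h3]].
have [/= hb [a1 a2]] := sub (x, GA1 x) (conj h1 (or_introl erefl)).
have [/= _ [b1 b2]] := sub (x, GA2 x) (conj h1 (or_intror erefl)).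
split => //=.
move: h2 h3; case: (mm_cases (GA1 x) (GA2 x)) => [[E1 [E2 h]]|[E1 [E2 h]]];
  rewrite E1 E2; split; lra.
Qed.

Lemma min_le_max (R : realType) (a b : R) : Num.min a b <= Num.max a b.
Proof. by case: (mm_cases a b) => [[E1 [E2 h]]|[E1 [E2 h]]]; rewrite E1 E2. Qed.

Lemma ivt0 (R : realType) (f : R -> R) (a b : R) : continuous f ->
  0 < f a -> f b < 0 -> exists c, Num.min a b <= c <= Num.max a b /\ f c = 0.
Proof.
move=> cf fa fb.
case: (leP a b) => ab.
  have cw : {within `[a, b], continuous f} by apply: continuous_subspaceT.
  have [|c] := IVT ab cw (v := 0).
    by case: (mm_cases (f a) (f b)) => [[E1 [E2 h]]|[E1 [E2 h]]]; rewrite E1 E2;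
      apply/andP; split; lra.
  rewrite in_itv /= => /andP[c1 c2] fc; exists c; split => //.
  by rewrite c1 c2.
have ba : b <= a by exact: ltW.
have cw : {within `[b, a], continuous f} by apply: continuous_subspaceT.
have [|c] := IVT ba cw (v := 0).
  by case: (mm_cases (f b) (f a)) => [[E1 [E2 h]]|[E1 [E2 h]]]; rewrite E1 E2;
    apply/andP; split; lra.
rewrite in_itv /= => /andP[c1 c2] fc; exists c; split => //.
by rewrite c1 c2.
Qed.

Lemma consistent (R : realType) (s mX : R) GX1 GX2 (mY : R) GY1 GY2 (x0 x : R) :
  goodS s mX GX1 GX2 -> goodS s mY GY1 GY2 ->
  chainS s mX GX1 GX2 `<=` ~` hullS s mY GY1 GY2 ->
  chainS s mY GY1 GY2 `<=` ~` hullS s mX GX1 GX2 ->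
  mX <= s * x0 -> mY <= s * x0 -> mX <= s * x -> mY <= s * x ->
  Num.max (GX1 x0) (GX2 x0) < Num.min (GY1 x0) (GY2 x0) ->
  Num.max (GX1 x) (GX2 x) < Num.min (GY1 x) (GY2 x).
Proof.
case=> hs c1 c2 _ [_ d1 d2 _] sXY sYX h1 h2 h3 h4 h0.
set phi := fun t => Num.min (GY1 t) (GY2 t) - Num.max (GX1 t) (GX2 t).
have cphi : continuous phi.
  by apply: cont_sub; [apply: cont_min|apply: cont_max].
case: (pw_sep (x:=x) sXY sYX h3 h4) => // hx.
exfalso.
have p0 : 0 < phi x0 by rewrite /phi; lra.
have px : phi x < 0.
  rewrite /phi; have := min_le_max (GY1 x) (GY2 x); have := min_le_max (GX1 x) (GX2 x); lra.
have [c [/andP[k1 k2] pc]] := ivt0 cphi p0 px.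
have dc : mX <= s * c /\ mY <= s * c.
  move: k1 k2; case: (mm_cases x0 x) => [[E1 [E2 h]]|[E1 [E2 h]]]; rewrite E1 E2;
    case: hs => E; rewrite E in h1 h2 h3 h4 *; lra.
case: (pw_sep (x:=c) sXY sYX dc.1 dc.2) => hc; move: pc; rewrite /phi.
  by lra.
have := min_le_max (GY1 c) (GY2 c); have := min_le_max (GX1 c) (GX2 c); lra.
Qed.

Definition concl (R : realType) (A B : set (R * R)) :=
  below A B \/ below B A \/ above A B \/ above B A \/
  to_the_left_of A B \/ to_the_left_of B A.

Lemma concl_sym (R : realType) (A B : set (R * R)) : concl A B -> concl B A.
Proof. rewrite /concl; tauto. Qed.

Lemma order_concl (R : realType) (s mX : R) GX1 GX2 (mY : R) GY1 GY2 :
  (forall x, mX <= s * x -> mY <= s * x ->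
     Num.max (GX1 x) (GX2 x) < Num.min (GY1 x) (GY2 x)) ->
  concl (chainS s mX GX1 GX2) (chainS s mY GY1 GY2).
Proof.
move=> H.
have key : forall a b, chainS s mY GY1 GY2 a -> chainS s mX GX1 GX2 b ->
    a.1 = b.1 -> b.2 < a.2.
  move=> [a1 a2] [b1 b2] [/= ha ea] [/= hb eb] e; rewrite /= in e; subst b1.
  have := H a1 hb ha.
  have := min_le_max (GY1 a1) (GY2 a1); have := min_le_max (GX1 a1) (GX2 a1).
  case: (mm_cases (GX1 a1) (GX2 a1)) => [[E1 [E2 h]]|[E1 [E2 h]]];
  case: (mm_cases (GY1 a1) (GY2 a1)) => [[F1 [F2 h']]|[F1 [F2 h']]];
  rewrite E1 E2 F1 F2; case: ea => ->; case: eb => ->; lra.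
case: (leP mX mY) => hm.
  do 3 right; left => c [q [[hq _] qc]].
  have hx : mX <= s * c by rewrite -qc; lra.
  split; first by exists (c, GX1 c); split => //; split => //; left.
  by move=> a b Ya Xb ac bc; apply: key => //; rewrite ac bc.
left => c [q [[hq _] qc]].
have hy : mY <= s * c by rewrite -qc; lra.
split; first by exists (c, GY1 c); split => //; split => //; left.
by move=> a b Xa Yb ac bc; apply: key => //; rewrite ac bc.
Qed.

Lemma side_case (R : realType) (sX mX : R) GX1 GX2 (sY mY : R) GY1 GY2 :
  goodS sX mX GX1 GX2 -> goodS sY mY GY1 GY2 ->
  chainS sY mY GY1 GY2 `<=` ~` chainS sX mX GX1 GX2 ->
  chainS sX mX GX1 GX2 `<=` hullS sY mY GY1 GY2 `\` chainS sY mY GY1 GY2 ->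
  concl (chainS sX mX GX1 GX2) (chainS sY mY GY1 GY2).
Proof.
move=> gX gY dYX sXY.
have E : sX = sY by apply: (sub_sign gX gY) => p /sXY [].
have hYX : chainS sY mY GY1 GY2 `<=` ~` hullS sX mX GX1 GX2.
  case: (dichot gX (chain_conn gY) dYX) => // H.
  by exfalso; apply: (tip_contra gX gY).
have hs := hull_sub (fun p Xp => (sXY p Xp).1).
subst sY; case: (gX) => hs' _ _ _; case: hs' => E; subst sX.
- rewrite /concl; do 5 right; move=> p; rewrite (left_side_R gX) (left_side_R gY) => -[Yp|nh].
    exact: hYX.
  by move=> hp; apply: nh; apply: hs.
- rewrite /concl; do 4 right; left; move=> p; rewrite (left_side_L gX) (left_side_L gY) => -[Xp|[hp nXp]].
    exact: sXY.
  by split; [apply: hs|move=> Yp; apply: (hYX p Yp)].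
Qed.

Lemma main_chain (R : realType) (sA mA : R) GA1 GA2 (sB mB : R) GB1 GB2 :
  goodS sA mA GA1 GA2 -> goodS sB mB GB1 GB2 ->
  chainS sA mA GA1 GA2 `&` chainS sB mB GB1 GB2 = set0 ->
  concl (chainS sA mA GA1 GA2) (chainS sB mB GB1 GB2).
Proof.
move=> gA gB dis.
have dAB : chainS sA mA GA1 GA2 `<=` ~` chainS sB mB GB1 GB2.
  by move=> p Ap Bp; have : (chainS sA mA GA1 GA2 `&` chainS sB mB GB1 GB2) p by [];
    rewrite dis.
have dBA : chainS sB mB GB1 GB2 `<=` ~` chainS sA mA GA1 GA2.
  by move=> p Bp Ap; apply: (dAB p Ap).
clear dis.
case: (dichot gB (chain_conn gA) dAB) => HA; last exact: side_case.
case: (dichot gA (chain_conn gB) dBA) => HB; last exact/concl_sym/side_case.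
case: (gA) => hsA _ _ _; case: (gB) => hsB _ _ _.
case: hsA => EA; case: hsB => EB; subst sA sB.
- set x0 := Num.max mA mB.
  have a0 : mA <= 1 * x0 by rewrite mul1r /x0; case: (mm_cases mA mB) => [[E1 [E2 h]]|[E1 [E2 h]]]; rewrite ?E1 ?E2; lra.
  have b0 : mB <= 1 * x0 by rewrite mul1r /x0; case: (mm_cases mA mB) => [[E1 [E2 h]]|[E1 [E2 h]]]; rewrite ?E1 ?E2; lra.
  case: (pw_sep (x:=x0) HA HB a0 b0) => h0.
    by apply: order_concl => x ha hb; apply: (consistent gA gB HA HB a0 b0 ha hb h0).
  by apply/concl_sym/order_concl => x hb ha; apply: (consistent gB gA HB HA b0 a0 hb ha h0).
- (* A right, B left : B is to the left of A *)
  rewrite /concl; do 5 right; move=> p; rewrite (left_side_R gA) (left_side_L gB) => -[Bp|[hp _]].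
    exact: HB.
  move=> hpA; case: p hp hpA => x y [/= hb [b1 b2]] [/= ha [a1 a2]].
  case: (pw_sep (x:=x) HA HB ha hb) => h; lra.
- rewrite /concl; do 4 right; left; move=> p; rewrite (left_side_L gA) (left_side_R gB) => -[Ap|[hp _]].
    exact: HA.
  move=> hpB; case: p hp hpB => x y [/= ha [a1 a2]] [/= hb [b1 b2]].
  case: (pw_sep (x:=x) HA HB ha hb) => h; lra.
- set x0 := - Num.max mA mB.
  have a0 : mA <= -1 * x0 by rewrite /x0 mulN1r opprK; case: (mm_cases mA mB) => [[E1 [E2 h]]|[E1 [E2 h]]]; rewrite ?E1 ?E2; lra.
  have b0 : mB <= -1 * x0 by rewrite /x0 mulN1r opprK; case: (mm_cases mA mB) => [[E1 [E2 h]]|[E1 [E2 h]]]; rewrite ?E1 ?E2; lra.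
  case: (pw_sep (x:=x0) HA HB a0 b0) => h0.
    by apply: order_concl => x ha hb; apply: (consistent gA gB HA HB a0 b0 ha hb h0).
  by apply/concl_sym/order_concl => x hb ha; apply: (consistent gB gA HB HA b0 a0 hb ha h0).
Qed.

Lemma cont_id (R : realType) : continuous (fun t : R => t).
Proof. by move=> t; exact: cvg_id. Qed.

Lemma cont_cst (R : realType) (T : topologicalType) (c : R) : continuous (fun _ : T => c).
Proof. by move=> t; exact: cvg_cst. Qed.

Lemma cont_add (R : realType) (T : topologicalType) (f g : T -> R) : continuous f -> continuous g ->
  continuous (fun p => f p + g p).
Proof. by move=> cf cg p; apply: continuousD; [exact: cf|exact: cg]. Qed.

Definition rcl (R : realType) (s x t : R) := s * Num.max (s * t) (s * x).
Definition scl (R : realType) (s x1 x2 t : R) :=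
  s * Num.min (Num.max (s * t) (s * x1)) (s * x2).

Lemma rcl_cont (R : realType) (s x : R) : continuous (rcl s x).
Proof.
apply: cont_mulc; apply: cont_max; [apply: cont_mulc; exact: cont_id|exact: cont_cst].
Qed.

Lemma scl_cont (R : realType) (s x1 x2 : R) : continuous (scl s x1 x2).
Proof.
apply: cont_mulc; apply: cont_min; last exact: cont_cst.
apply: cont_max; [apply: cont_mulc; exact: cont_id|exact: cont_cst].
Qed.

Lemma sst (R : realType) (s t : R) : s = 1 \/ s = -1 -> s * (s * t) = t.
Proof. by move=> hs; rewrite mulrA ss1 // mul1r. Qed.

Lemma rcl_in (R : realType) (s x t : R) : s = 1 \/ s = -1 -> s * x <= s * rcl s x t.
Proof.
move=> hs; rewrite /rcl sst //.
by case: (mm_cases (s * t) (s * x)) => [[E1 [E2 h]]|[E1 [E2 h]]]; rewrite ?E2; lra.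
Qed.

Lemma rcl_id (R : realType) (s x t : R) : s = 1 \/ s = -1 -> s * x <= s * t ->
  rcl s x t = t.
Proof.
move=> hs h; rewrite /rcl.
case: (mm_cases (s * t) (s * x)) => [[E1 [E2 h']]|[E1 [E2 h']]]; rewrite E2 ?sst //.
have E : s * x = s * t by apply/eqP; rewrite eq_le h h'.
by rewrite -(sst x hs) E sst.
Qed.

Lemma rcl_x (R : realType) (s x t : R) : s = 1 \/ s = -1 -> s * t <= s * x ->
  rcl s x t = x.
Proof.
move=> hs h; rewrite /rcl.
case: (mm_cases (s * t) (s * x)) => [[E1 [E2 h']]|[E1 [E2 h']]]; rewrite E2 ?sst //.
have E : s * t = s * x by apply/eqP; rewrite eq_le h h'.
by rewrite -(sst t hs) E sst.
Qed.

Lemma seg_s (R : realType) (s x1 x2 t : R) : s = 1 \/ s = -1 -> s * x1 <= s * x2 ->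
  seg x1 x2 t <-> s * x1 <= s * t /\ s * t <= s * x2.
Proof.
move=> hs h; rewrite /seg /=.
case: (mm_cases x1 x2) => [[E1 [E2 h']]|[E1 [E2 h']]]; rewrite E1 E2;
  (split; [move/andP => [a b]|move=> [a b]; apply/andP]);
  case: hs => E; rewrite E in h a b *; lra.
Qed.

Lemma clamp_bnd (R : realType) (u a b : R) : a <= b ->
  a <= Num.min (Num.max u a) b /\ Num.min (Num.max u a) b <= b.
Proof.
move=> ab; case: (mm_cases u a) => [[_ [E h1]]|[_ [E h1]]]; rewrite E.
  by case: (mm_cases a b) => [[F [_ h2]]|[F [_ h2]]]; rewrite F; lra.
by case: (mm_cases u b) => [[F [_ h2]]|[F [_ h2]]]; rewrite F; lra.
Qed.

Lemma scl_in (R : realType) (s x1 x2 t : R) : s = 1 \/ s = -1 -> s * x1 <= s * x2 ->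
  seg x1 x2 (scl s x1 x2 t).
Proof.
move=> hs h; apply/(seg_s _ hs h); rewrite /scl sst //; exact: clamp_bnd.
Qed.

Lemma clamp_id (R : realType) (u a b : R) : a <= u -> u <= b ->
  Num.min (Num.max u a) b = u.
Proof.
move=> h1 h2; case: (mm_cases u a) => [[_ [E h]]|[_ [E h]]]; rewrite E.
  have -> : a = u by apply/eqP; rewrite eq_le h h1.
  by case: (mm_cases u b) => [[F [_ h']]|[F [_ h']]]; rewrite F //; apply/eqP; rewrite eq_le h' h2.
by case: (mm_cases u b) => [[F [_ h']]|[F [_ h']]]; rewrite F //; apply/eqP; rewrite eq_le h' h2.
Qed.

Lemma clamp_b (R : realType) (u a b : R) : a <= b -> b <= u ->
  Num.min (Num.max u a) b = b.
Proof.
move=> h1 h2; case: (mm_cases u a) => [[_ [E h]]|[_ [E h]]]; rewrite E.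
  by case: (mm_cases a b) => [[F [_ h']]|[F [_ h']]]; rewrite F //; lra.
by case: (mm_cases u b) => [[F [_ h']]|[F [_ h']]]; rewrite F //; apply/eqP; rewrite eq_le h' h2.
Qed.

Lemma rep_core (R : realType) (s x1 x2 : R) (f1 f2 f3 : R -> R) :
  s = 1 \/ s = -1 -> s * x1 <= s * x2 ->
  {within [set t | s * x1 <= s * t], continuous f1} ->
  {within seg x1 x2, continuous f2} ->
  {within [set t | s * x2 <= s * t], continuous f3} ->
  f1 x1 = f2 x1 -> f2 x2 = f3 x2 ->
  exists m G1 G2, goodS s m G1 G2 /\
   graph_over f1 [set t | s * x1 <= s * t] `|` graph_over f2 (seg x1 x2)
   `|` graph_over f3 [set t | s * x2 <= s * t] = chainS s m G1 G2.
Proof.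
move=> hs h12 cf1 cf2 cf3 e1 e2.
have c1 : continuous (f1 \o rcl s x1).
  by apply: (within_comp cf1 (@rcl_cont _ s x1)) => t; exact: rcl_in.
have c2 : continuous (fun t => f2 (scl s x1 x2 t)).
  by apply: (within_comp cf2 (@scl_cont _ s x1 x2)) => t; exact: scl_in.
have c3 : continuous (fun t => f3 (rcl s x2 t)).
  by apply: (within_comp cf3 (@rcl_cont _ s x2)) => t; exact: rcl_in.
have sclid : forall t, s * x1 <= s * t -> s * t <= s * x2 -> scl s x1 x2 t = t.
  by move=> t a b; rewrite /scl clamp_id // sst.
have sclx2 : forall t, s * x2 <= s * t -> scl s x1 x2 t = x2.
  by move=> t a; rewrite /scl clamp_b // sst.
exists (s * x1), (f1 \o rcl s x1),
  (fun t => f2 (scl s x1 x2 t) + f3 (rcl s x2 t) - f3 x2).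
split.
  split => //.
    by apply: cont_sub; [apply: cont_add|apply: cont_cst].
  rewrite sst // /= rcl_id // sclid // rcl_x //; lra.
apply/seteqP; split => [[x y]|[x y] [/= hx]].
  move=> [[[/= hx ->]|[/= hx ->]]|[/= hx ->]]; rewrite /chainS /=.
  - by split => //; left; rewrite rcl_id.
  - have [a b] := (seg_s _ hs h12).1 hx.
    split => //; right; rewrite sclid // rcl_x //; lra.
  - split; first by lra.
    by right; rewrite sclx2 // rcl_id // -e2; lra.
move=> [->|->].
  by left; left; split => //=; rewrite rcl_id.
case: (leP (s * x) (s * x2)) => hx2.
  left; right; split => /=; first by apply/(seg_s _ hs h12).
  by rewrite sclid // rcl_x //; lra.
right; split => /=; first by lra.
by rewrite sclx2 ?rcl_id //; lra.
Qed.

Lemma seg_sym (R : realType) (a b : R) : seg a b = seg b a.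
Proof.
apply/seteqP; split => t; rewrite /seg /=;
  case: (mm_cases a b) => [[E1 [E2 h]]|[E1 [E2 h]]];
  case: (mm_cases b a) => [[F1 [F2 h']]|[F1 [F2 h']]];
  rewrite E1 E2 F1 F2 => /andP[u v]; apply/andP; split; lra.
Qed.

Lemma rep_gen (R : realType) (s x1 x2 : R) (f1 f2 f3 : R -> R) :
  s = 1 \/ s = -1 ->
  {within [set t | s * x1 <= s * t], continuous f1} ->
  {within seg x1 x2, continuous f2} ->
  {within [set t | s * x2 <= s * t], continuous f3} ->
  f1 x1 = f2 x1 -> f2 x2 = f3 x2 ->
  exists m G1 G2, goodS s m G1 G2 /\
   graph_over f1 [set t | s * x1 <= s * t] `|` graph_over f2 (seg x1 x2)
   `|` graph_over f3 [set t | s * x2 <= s * t] = chainS s m G1 G2.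
Proof.
move=> hs cf1 cf2 cf3 e1 e2.
case: (leP (s * x1) (s * x2)) => h; first exact: rep_core.
rewrite seg_sym in cf2 *.
have [m [G1 [G2 [g E]]]] := rep_core hs (ltW h) cf3 cf2 cf1 (esym e2) (esym e1).
exists m, G1, G2; split => //; rewrite -E.
by rewrite setUC setUA -setUA (setUC (graph_over f1 _)) setUA.
Qed.

Lemma ray_s (R : realType) (x : R) (d : bool) :
  ray x d = [set t | (if d then 1 else -1) * x <= (if d then 1 else -1) * t].
Proof.
apply/seteqP; split => t; case: d => /= h; lra.
Qed.

Lemma rep (R : realType) (A : set (R * R)) :
  three_monotone_chain A -> non_wide A ->
  exists s m G1 G2, goodS s m G1 G2 /\ A = chainS s m G1 G2.
Proof.
move=> [x1 [x2 [d1 [d3 [f1 [f2 [f3 [cf1 cf2 cf3 [e1 e2] EA]]]]]]]] nw.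
have d13 : d1 = d3.
  apply: contrapT => nd; apply: nw => c.
  case: d1 d3 nd EA cf1 cf3 => [] [] // _ EA _ _; rewrite EA.
  - case: (leP x1 c) => h1.
      by exists (c, f1 c); split => //; left; left; split.
    case: (leP c x2) => h2.
      by exists (c, f3 c); split => //; right; split.
    exists (c, f2 c); split => //; left; right; split => //; rewrite /seg /=.
    by case: (mm_cases x1 x2) => [[E1 [E2 h]]|[E1 [E2 h]]]; rewrite E1 E2; apply/andP; split; lra.
  - case: (leP c x1) => h1.
      by exists (c, f1 c); split => //; left; left; split.
    case: (leP x2 c) => h2.
      by exists (c, f3 c); split => //; right; split.
    exists (c, f2 c); split => //; left; right; split => //; rewrite /seg /=.
    by case: (mm_cases x1 x2) => [[E1 [E2 h]]|[E1 [E2 h]]]; rewrite E1 E2; apply/andP; split; lra.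
rewrite -d13 in EA cf3; rewrite !ray_s in EA cf1 cf3.
have hs : (if d1 then 1 else -1 : R) = 1 \/ (if d1 then 1 else -1 : R) = -1.
  by case: (d1); [left|right].
have [m [G1 [G2 [g E]]]] := rep_gen hs cf1 cf2 cf3 e1 e2.
by exists (if d1 then 1 else -1), m, G1, G2; rewrite EA E.
Qed.

Unset Implicit Arguments.

Theorem lemma8 (R : realType) (A B : set (R * R)) :
  three_monotone_chain A -> three_monotone_chain B ->
  non_wide A -> non_wide B -> A `&` B = set0 ->
  below A B \/ below B A \/ above A B \/ above B A \/
  to_the_left_of A B \/ to_the_left_of B A.
Proof.
move=> tA tB nA nB dis.
have [sA [mA [GA1 [GA2 [gA EA]]]]] := rep tA nA.
have [sB [mB [GB1 [GB2 [gB EB]]]]] := rep tB nB.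
rewrite EA EB in dis *.
exact: main_chain gA gB dis.
Qed.
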